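(* Let $(G,\sigma)$, $(A,\pi_A)$, $(B,\pi_B)$ be connected signed graphs with $G=A\,\square\,B$ (so $V(G)=V(A)\times V(B)$). Then $\sigma$ is equivalent to the signature of $(A,\pi_A)\,\square\,(B,\pi_B)$ if and only if all three of the following hold: (1) every $A$-layer of $(G,\sigma)$, identified with $A$ via the projection, carries a signature equivalent to $\pi_A$; (2) at least one $B$-layer of $(G,\sigma)$, identified with $B$ via the projection, carries a signature equivalent to $\pi_B$; (3) for every edge $e$ of $A$ and every pair of distinct copies $e_1,e_2$ of $e$ in $G$, if $e_1$ and $e_2$ lie on a common $4$-cycle of $G$, then this $4$-cycle is balanced in $(G,\sigma)$.
   Context: A signed graph $(G,\sigma)$ is a simple loopless undirected graph $G$ with a signature $\sigma:E(G)\to\{+1,-1\}$. Switching a vertex negates the signs of its incident edges; two signatures of the same graph are equivalent if one is obtained from the other by switching a set of vertices. A cycle is balanced if the product of the signs of its edges is $+1$. The Cartesian product $(A,\pi_A)\,\square\,(B,\pi_B)$ is the signed graph on $A\,\square\,B$ where $(a,b_1)(a,b_2)$ has sign $\pi_B(b_1b_2)$ and $(a_1,b)(a_2,b)$ has sign $\pi_A(a_1a_2)$. For $b\in V(B)$, the $A$-layer at $b$ is the subgraph of $G$ induced by $V(A)\times\{b\}$; $B$-layers are defined symmetrically. A copy of an edge $a_1a_2$ of $A$ is an edge $(a_1,b)(a_2,b)$ of $G$ for some $b\in V(B)$. *)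

(* Defs.v *)
From mathcomp Require Import all_boot.
Set Implicit Arguments. Unset Strict Implicit. Unset Printing Implicit Defensive.

Definition simple_graph (T : finType) (e : rel T) : Prop :=
  symmetric e /\ irreflexive e.

Definition connected (T : finType) (e : rel T) : Prop :=
  (exists x : T, True) /\ forall x y : T, connect e x y.

(* A signature is encoded as a symmetric function on vertex pairs;
   [true] means sign -1, [false] means sign +1.  Only values on edges matter. *)
Definition sym_sig (T : finType) (s : T -> T -> bool) : Prop :=
  forall x y, s x y = s y x.

Definition sw_equiv (T : finType) (e : rel T) (s1 s2 : T -> T -> bool) : Prop :=
  exists S : {set T}, forall x y, e x y ->
    s2 x y = s1 x y (+) (x \in S) (+) (y \in S).

Definition cart_rel (A B : finType) (eA : rel A) (eB : rel B) : rel (A * B) :=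
  fun u v => ((u.1 == v.1) && eB u.2 v.2) || ((u.2 == v.2) && eA u.1 v.1).

Definition cart_sig (A B : finType) (pA : A -> A -> bool) (pB : B -> B -> bool)
  : A * B -> A * B -> bool :=
  fun u v => if u.1 == v.1 then pB u.2 v.2 else pA u.1 v.1.

Definition is_4cycle (T : finType) (e : rel T) (v0 v1 v2 v3 : T) : bool :=
  [&& uniq [:: v0; v1; v2; v3], e v0 v1, e v1 v2, e v2 v3 & e v3 v0].

Definition edge_on_4cycle (T : finType) (x y v0 v1 v2 v3 : T) : bool :=
  [|| [set x; y] == [set v0; v1], [set x; y] == [set v1; v2],
      [set x; y] == [set v2; v3] | [set x; y] == [set v3; v0]].

Definition balanced4 (T : finType) (s : T -> T -> bool) (v0 v1 v2 v3 : T) : bool :=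
  ~~ (s v0 v1 (+) s v1 v2 (+) s v2 v3 (+) s v3 v0).

(* Main.v *)
Require Import Defs.
From mathcomp Require Import all_boot.
Set Implicit Arguments. Unset Strict Implicit.

Lemma connect_prop (T : finType) (e : rel T) (P : T -> Prop) :
  (forall x y, e x y -> P x -> P y) -> forall x y, connect e x y -> P x -> P y.
Proof.
move=> step x y /connectP[p]; elim: p x => [|z p IH] x /=; first by move=> _ ->.
case/andP=> exz pz ly Px; apply: (IH z pz ly); exact: step Px.
Qed.

Section Sq.
Variables (A B : finType) (eA : rel A) (eB : rel B).
Hypotheses (iA : irreflexive eA) (iB : irreflexive eB).
Variables (a1 a2 : A) (b b' : B).
Hypotheses (na : a1 != a2) (nb : b != b').

Definition Rc (c : B) (v : A * B) := ((v.1 == a1) || (v.1 == a2)) && (v.2 == c).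

Lemma edge_R c p q : [set (a1, c); (a2, c)] == [set p; q] -> Rc c p && Rc c q.
Proof.
move/eqP/setP=> E; have := E p; have := E q; rewrite !inE !eqxx ?orbT /=.
case: p q {E} => [pa pb] [qa qb] /=; rewrite -!pair_eqE /=;move=> /orP[] /andP[/eqP-> /eqP->] /orP[] /andP[/eqP-> /eqP->];
 by rewrite /Rc /= !eqxx ?orbT.
Qed.

Lemma edge_on_R c v0 v1 v2 v3 : edge_on_4cycle (a1, c) (a2, c) v0 v1 v2 v3 ->
  [|| Rc c v0 && Rc c v1, Rc c v1 && Rc c v2, Rc c v2 && Rc c v3 | Rc c v3 && Rc c v0].
Proof.
by case/or4P=> /edge_R ->; rewrite ?orbT.
Qed.

Lemma R_excl v : Rc b v -> Rc b' v -> False.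
Proof. by rewrite /Rc => /andP[_ /eqP->] /andP[_]; rewrite (negbTE nb). Qed.

Lemma cover v0 v1 v2 v3 :
  edge_on_4cycle (a1, b) (a2, b) v0 v1 v2 v3 ->
  edge_on_4cycle (a1, b') (a2, b') v0 v1 v2 v3 ->
  [/\ Rc b v0 || Rc b' v0, Rc b v1 || Rc b' v1, Rc b v2 || Rc b' v2 & Rc b v3 || Rc b' v3].
Proof.
move=> /edge_on_R H1 /edge_on_R H2.
have X0 := @R_excl v0; have X1 := @R_excl v1; have X2 := @R_excl v2; have X3 := @R_excl v3.
move: H1 H2 X0 X1 X2 X3.
case: (Rc b v0); case: (Rc b v1); case: (Rc b v2); case: (Rc b v3);
case: (Rc b' v0); case: (Rc b' v1); case: (Rc b' v2); case: (Rc b' v3) => //= *;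
 try by split.
all: exfalso; intuition.
Qed.

Variables (piA : A -> A -> bool) (piB : B -> B -> bool).
Hypotheses (sA : sym_sig piA) (sB : sym_sig piB).

Lemma cart_val u v : Rc b u || Rc b' u -> Rc b v || Rc b' v ->
  cart_rel eA eB u v ->
  cart_sig piA piB u v = if (u.1 == a1) (+) (v.1 == a1) then piA a1 a2 else piB b b'.
Proof.
have na' : (a2 == a1) = false by rewrite eq_sym (negbTE na).
have nb' : (b' == b) = false by rewrite eq_sym (negbTE nb).
case: u v => [ua ub] [va vb]; rewrite /Rc /cart_rel /cart_sig /=.
move=> /orP[] /andP[/orP[] /eqP-> /eqP->] /orP[] /andP[/orP[] /eqP-> /eqP->];
 rewrite ?eqxx ?na' ?nb' ?(negbTE na) ?(negbTE nb) ?iA ?iB //= ?sA ?sB //.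
Qed.

Lemma cart_bal v0 v1 v2 v3 :
  is_4cycle (cart_rel eA eB) v0 v1 v2 v3 ->
  edge_on_4cycle (a1, b) (a2, b) v0 v1 v2 v3 ->
  edge_on_4cycle (a1, b') (a2, b') v0 v1 v2 v3 ->
  balanced4 (cart_sig piA piB) v0 v1 v2 v3.
Proof.
move=> C E1 E2; have [c0 c1 c2 c3] := cover E1 E2.
move: C; rewrite /is_4cycle => /and5P[_ e01 e12 e23 e30].
rewrite /balanced4 (cart_val c0 c1 e01) (cart_val c1 c2 e12) (cart_val c2 c3 e23)
  (cart_val c3 c0 e30).
by case: (v0.1 == a1); case: (v1.1 == a1); case: (v2.1 == a1); case: (v3.1 == a1);
  case: (piA a1 a2); case: (piB b b').
Qed.
End Sq.

Theorem lemma4p8 (A B : finType) (eA : rel A) (eB : rel B)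
    (piA : A -> A -> bool) (piB : B -> B -> bool) (sigma : A * B -> A * B -> bool) :
  simple_graph eA -> simple_graph eB ->
  connected eA -> connected eB -> connected (cart_rel eA eB) ->
  sym_sig piA -> sym_sig piB -> sym_sig sigma ->
  (sw_equiv (cart_rel eA eB) sigma (cart_sig piA piB) <->
   [/\ (forall b : B, sw_equiv eA (fun a1 a2 => sigma (a1, b) (a2, b)) piA),
       (exists a : A, sw_equiv eB (fun b1 b2 => sigma (a, b1) (a, b2)) piB) &
       (forall (a1 a2 : A) (b b' : B), eA a1 a2 -> b != b' ->
        forall v0 v1 v2 v3 : A * B,
          is_4cycle (cart_rel eA eB) v0 v1 v2 v3 ->
          edge_on_4cycle (a1, b) (a2, b) v0 v1 v2 v3 ->
          edge_on_4cycle (a1, b') (a2, b') v0 v1 v2 v3 ->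
          balanced4 sigma v0 v1 v2 v3)]).
Proof.
move=> [sgA iA] [sgB iB] [[x0 _] cA] cB cG spA spB ss.
have neqA : forall x y, eA x y -> x != y.
  by move=> x y exy; apply: contraTneq exy => ->; rewrite iA.
have neqB : forall x y, eB x y -> x != y.
  by move=> x y exy; apply: contraTneq exy => ->; rewrite iB.
split.
- case=> S HS; split.
  + move=> b; exists [set a | (a, b) \in S] => x y exy.
    have := HS (x, b) (y, b); rewrite /cart_rel /cart_sig /= eqxx exy orbT => /(_ isT).
    by rewrite (negbTE (neqA _ _ exy)) !inE.
  + exists x0; exists [set b | (x0, b) \in S] => x y exy.
    have := HS (x0, x) (x0, y); rewrite /cart_rel /cart_sig /= eqxx exy => /(_ isT).
    by rewrite !inE.
  + move=> a1 a2 b b' e12 nb v0 v1 v2 v3 C E1 E2.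
    have := cart_bal iA iB (neqA _ _ e12) nb spA spB C E1 E2.
    move: C; rewrite /is_4cycle /balanced4 => /and5P[_ e01 e12' e23 e30].
    rewrite !HS //.
    by case: (v0 \in S); case: (v1 \in S); case: (v2 \in S); case: (v3 \in S);
      case: (sigma v0 v1); case: (sigma v1 v2); case: (sigma v2 v3); case: (sigma v3 v0).
- case=> H1 [y0 [T0 HT0]] H3.
  have [R HR] := fin_all_exists H1.
  pose c b := (y0 \in R b) (+) (b \in T0).
  pose S := [set v : A * B | (v.1 \in R v.2) (+) c v.2].
  have HB : forall a b b', eB b b' ->
      piB b b' = sigma (a, b) (a, b') (+) ((a, b) \in S) (+) ((a, b') \in S).
    move=> a.
    apply: (@connect_prop A eA (fun a => forall b b', eB b b' ->
      piB b b' = sigma (a, b) (a, b') (+) ((a, b) \in S) (+) ((a, b') \in S)) _ y0 a (cA y0 a)).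
    + clear a; move=> a a' eaa' IH b b' ebb'.
      have nb := neqB _ _ ebb'; have na := neqA _ _ eaa'.
      have nb' : (b' == b) = false by rewrite eq_sym (negbTE nb).
      have na' : (a' == a) = false by rewrite eq_sym (negbTE na).
      have := H3 a a' b b' eaa' nb (a, b) (a', b) (a', b') (a, b').
      have Hc : is_4cycle (cart_rel eA eB) (a, b) (a', b) (a', b') (a, b').
        rewrite /is_4cycle /cart_rel /= !inE -!pair_eqE /= !eqxx na' nb'
          (negbTE na) (negbTE nb) eaa' ebb' /=.
        by rewrite sgA sgB eaa' ebb'.
      move=> /(_ Hc) /(_ (introT or4P (Or41 _ _ _ (eqxx _)))).
      move=> /(_ (introT or4P (Or43 _ _ _ (introT eqP (setUC _ _))))).
      rewrite /balanced4 (ss (a', b') (a, b')) (ss (a, b') (a, b)) => Bal.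
      have E1 := HR b a a' eaa'; have E2 := HR b' a a' eaa'.
      rewrite E1 in E2.
      rewrite (IH b b' ebb') !inE /=.
      move: Bal E2.
      by case: (sigma (a, b) (a', b)); case: (sigma (a', b) (a', b'));
        case: (sigma (a, b') (a', b')); case: (sigma (a, b) (a, b'));
        case: (a \in R b); case: (a' \in R b); case: (a \in R b'); case: (a' \in R b');
        case: (c b); case: (c b').
    + move=> b b' ebb'; rewrite !inE /= /c (HT0 b b' ebb').
      by case: (y0 \in R b); case: (y0 \in R b'); case: (b \in T0); case: (b' \in T0);
        case: (sigma (y0, b) (y0, b')).
  exists S => -[xa xb] [ya yb]; rewrite /cart_rel /cart_sig /=.
  case/orP=> /andP[/eqP <- e].
  + by rewrite eqxx; apply: HB.
  + rewrite (negbTE (neqA _ _ e)) (HR xb _ _ e) !inE /=.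
    by case: (xa \in R xb); case: (ya \in R xb); case: (c xb);
      case: (sigma (xa, xb) (ya, xb)).
Qed.
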